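(* Let $n\ge 1$, $d\ge r\ge 1$, let $\mathrm{St}(d,r)=\{x\in\mathbb{R}^{d\times r}: x^\top x=I_r\}$ with tangent spaces $\mathrm{T}_x\mathcal{M}=\{\xi\in\mathbb{R}^{d\times r}: x^\top\xi+\xi^\top x=0\}$, and let $W\in\mathbb{R}^{n\times n}$ be a symmetric, nonnegative, doubly stochastic matrix and $t\ge 1$ an integer. Let $\mathcal{R}$ be a retraction on $\mathrm{St}(d,r)$ and $M>0$ a constant such that $\|\mathcal{R}_x(\xi)-(x+\xi)\|_F\le M\|\xi\|_F^2$ for all $x\in\mathrm{St}(d,r)$, $\xi\in \mathrm{T}_x\mathcal{M}$. Let $\delta_1,\delta_2>0$ satisfy $\delta_1\le \frac{1}{5\sqrt r}\delta_2$ and $\delta_2\le \frac16$. Suppose $\mathbf{x}_k=(x_{1,k},\dots,x_{n,k})\in\mathcal{N}$ and $\mathbf{x}_{k+1}=(x_{1,k+1},\dots,x_{n,k+1})\in\mathcal{N}_1$, where for each $i\in[n]$ $$x_{i,k+1}=\mathcal{R}_{x_{i,k}}\big(-\alpha\,\mathrm{grad}\,\varphi_i^t(\mathbf{x}_k)+\beta u_{i,k}\big),$$ with $u_{i,k}\in\mathrm{T}_{x_{i,k}}\mathcal{M}$, $0\le\alpha\le \frac1M$ and $\beta\ge 0$. Let $\mathbf{u}_k=(u_{1,k},\dots,u_{n,k})$ and $\hat u_k=\frac1n\sum_{i=1}^n u_{i,k}$. Then $$\|\bar x_k-\bar x_{k+1}\|_F\le \frac{1}{1-2\delta_1^2}\left(\frac{2L_t^2\alpha+L_t\alpha}{n}\|\mathbf{x}_k-\bar{\mathbf{x}}_k\|_F^2+\beta\|\hat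 u_k\|_F+\frac{2M\beta^2}{n}\|\mathbf{u}_k\|_F^2\right),$$ where $\bar x_k,\bar x_{k+1}$ are the induced arithmetic means of $\mathbf{x}_k$, $\mathbf{x}_{k+1}$ and $\bar{\mathbf{x}}_k=(\bar x_k,\dots,\bar x_k)$.
   Context: For $\mathbf{x}=(x_1,\dots,x_n)\in\mathrm{St}(d,r)^n$, $\|\mathbf{x}\|_F^2=\sum_i\|x_i\|_F^2$. The induced arithmetic mean (IAM) is $\bar x\in\arg\min_{y\in\mathrm{St}(d,r)}\sum_{i=1}^n\|y-x_i\|_F^2$, and $\bar{\mathbf{x}}=(\bar x,\dots,\bar x)$. The consensus function is $\varphi^t(\mathbf{x})=\frac14\sum_{i,j=1}^n W^t_{ij}\|x_i-x_j\|_F^2$, where $W^t_{ij}$ is the $(i,j)$ entry of the matrix power $W^t$; its Riemannian gradient has blocks $\mathrm{grad}\,\varphi^t_i(\mathbf{x})=\mathcal{P}_{\mathrm{T}_{x_i}\mathcal{M}}\big(x_i-\sum_{j=1}^n W^t_{ij}x_j\big)$, where $\mathcal{P}_{\mathrm{T}_{x}\mathcal{M}}(y)=y-\frac12 x(x^\top y+y^\top x)$. The constant $L_t=1-\lambda_n(W^t)$, with $\lambda_n(W^t)$ the smallest eigenvalue of $W^t$. The neighborhoods are $\mathcal{N}_1=\{\mathbf{x}\in\mathrm{St}(d,r)^n:\|\mathbf{x}-\bar{\mathbf{x}}\|_F^2\le n\delta_1^2\}$, $\mathcal{N}_2=\{\mathbf{x}\in\mathrm{St}(d,r)^n:\max_{i\in[n]}\|x_i-\bar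 x\|_F\le\delta_2\}$, and $\mathcal{N}=\mathcal{N}_1\cap\mathcal{N}_2$. *)

(* Defs.v *)
From HB Require Import structures.
From mathcomp Require Import all_boot all_order all_algebra.
From mathcomp Require Import reals.
Set Implicit Arguments. Unset Strict Implicit. Unset Printing Implicit Defensive.
Import Order.TTheory GRing.Theory Num.Theory.
Local Open Scope ring_scope.

Section Defs.
Variable R : realType.

Definition frob2 {m p : nat} (A : 'M[R]_(m, p)) : R :=
  \sum_(i < m) \sum_(j < p) A i j ^+ 2.
Definition frob {m p : nat} (A : 'M[R]_(m, p)) : R := Num.sqrt (frob2 A).

Definition stiefel {d r : nat} (x : 'M[R]_(d, r)) : Prop := x^T *m x = 1%:M.

Definition tangent {d r : nat} (x xi : 'M[R]_(d, r)) : Prop :=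
  x^T *m xi + xi^T *m x = 0.

Definition projT {d r : nat} (x y : 'M[R]_(d, r)) : 'M[R]_(d, r) :=
  y - (2%:R^-1) *: (x *m (x^T *m y + y^T *m x)).

(* retraction on St(d,r): maps the tangent bundle into St, R_x(0) = x, and
   its differential at 0 is the identity (first-order agreement with x + xi,
   stated in epsilon-delta form). *)
Definition retraction {d r : nat} (Rt : 'M[R]_(d, r) -> 'M[R]_(d, r) -> 'M[R]_(d, r)) : Prop :=
  forall x, stiefel x ->
    [/\ forall xi, tangent x xi -> stiefel (Rt x xi),
        Rt x 0 = x &
        forall eps : R, 0 < eps -> exists2 del : R, 0 < del &
          forall xi, tangent x xi -> frob xi < del ->
            frob (Rt x xi - (x + xi)) <= eps * frob xi].

Definition mxpow {n : nat} (W : 'M[R]_n) (t : nat) : 'M[R]_n :=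
  iter t (fun A => W *m A) 1%:M.

Definition min_eigenvalue {n : nat} (A : 'M[R]_n) (lam : R) : Prop :=
  eigenvalue A lam /\ forall mu, eigenvalue A mu -> lam <= mu.

Definition Lconst (lam : R) : R := 1 - lam.

Definition grad_phi {n d r : nat} (W : 'M[R]_n) (t : nat)
  (x : 'I_n -> 'M[R]_(d, r)) (i : 'I_n) : 'M[R]_(d, r) :=
  projT (x i) (x i - \sum_(j < n) mxpow W t i j *: x j).

Definition dist2 {n d r : nat} (x : 'I_n -> 'M[R]_(d, r)) (y : 'M[R]_(d, r)) : R :=
  \sum_(i < n) frob2 (x i - y).

Definition is_IAM {n d r : nat} (x : 'I_n -> 'M[R]_(d, r)) (y : 'M[R]_(d, r)) : Prop :=
  stiefel y /\ forall z, stiefel z -> dist2 x y <= dist2 x z.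

Definition inN1 {n d r : nat} (delta1 : R) (x : 'I_n -> 'M[R]_(d, r)) (xb : 'M[R]_(d, r)) : Prop :=
  (forall i, stiefel (x i)) /\ dist2 x xb <= n%:R * delta1 ^+ 2.
Definition inN2 {n d r : nat} (delta2 : R) (x : 'I_n -> 'M[R]_(d, r)) (xb : 'M[R]_(d, r)) : Prop :=
  (forall i, stiefel (x i)) /\ forall i, frob (x i - xb) <= delta2.
Definition inN {n d r : nat} (delta1 delta2 : R) (x : 'I_n -> 'M[R]_(d, r)) (xb : 'M[R]_(d, r)) : Prop :=
  inN1 delta1 x xb /\ inN2 delta2 x xb.

Definition sym_doubly_stochastic {n : nat} (W : 'M[R]_n) : Prop :=
  [/\ W^T = W, forall i j, 0 <= W i j,
      forall i, \sum_(j < n) W i j = 1 & forall j, \sum_(i < n) W i j = 1].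

End Defs.

(* Main.v *)
Require Import Defs.
From HB Require Import structures.
From mathcomp Require Import all_boot all_order all_algebra.
From mathcomp Require Import reals.
From mathcomp Require Import classical_sets.
From mathcomp Require Import ring lra.
Import Order.TTheory GRing.Theory Num.Theory.
Local Open Scope ring_scope.

Definition ip {R : realType} {m p : nat} (A B : 'M[R]_(m, p)) : R := \tr (A^T *m B).

Lemma ipC {R : realType} {m p : nat} (A B : 'M[R]_(m, p)) : ip A B = ip B A.
Proof. by rewrite /ip -mxtrace_tr trmx_mul trmxK. Qed.

Lemma ipDl {R : realType} {m p : nat} (A B C : 'M[R]_(m, p)) : ip (A + B) C = ip A C + ip B C.
Proof. by rewrite /ip linearD /= mulmxDl mxtraceD. Qed.

Lemma ipDr {R : realType} {m p : nat} (A B C : 'M[R]_(m, p)) : ip C (A + B) = ip C A + ip C B.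
Proof. by rewrite /ip mulmxDr mxtraceD. Qed.

Lemma ipZl {R : realType} {m p : nat} (c : R) (A B : 'M[R]_(m, p)) : ip (c *: A) B = c * ip A B.
Proof. by rewrite /ip linearZ /= -scalemxAl mxtraceZ. Qed.

Lemma ipZr {R : realType} {m p : nat} (c : R) (A B : 'M[R]_(m, p)) : ip A (c *: B) = c * ip A B.
Proof. by rewrite /ip -scalemxAr mxtraceZ. Qed.

Lemma ipNl {R : realType} {m p : nat} (A B : 'M[R]_(m, p)) : ip (- A) B = - ip A B.
Proof. by rewrite -scaleN1r ipZl mulN1r. Qed.

Lemma ipNr {R : realType} {m p : nat} (A B : 'M[R]_(m, p)) : ip A (- B) = - ip A B.
Proof. by rewrite -scaleN1r ipZr mulN1r. Qed.

Lemma ipBl {R : realType} {m p : nat} (A B C : 'M[R]_(m, p)) : ip (A - B) C = ip A C - ip B C.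
Proof. by rewrite ipDl ipNl. Qed.

Lemma ipBr {R : realType} {m p : nat} (A B C : 'M[R]_(m, p)) : ip C (A - B) = ip C A - ip C B.
Proof. by rewrite ipDr ipNr. Qed.

Lemma ip0l {R : realType} {m p : nat} (A : 'M[R]_(m, p)) : ip 0 A = 0.
Proof. by rewrite /ip linear0 mul0mx mxtrace0. Qed.

Lemma ip0r {R : realType} {m p : nat} (A : 'M[R]_(m, p)) : ip A 0 = 0.
Proof. by rewrite ipC ip0l. Qed.

Lemma ip_suml {R : realType} {m p k : nat} (F : 'I_k -> 'M[R]_(m, p)) B :
  ip (\sum_(i < k) F i) B = \sum_(i < k) ip (F i) B.
Proof.
elim/big_rec2: _ => [|i y A _ <-]; first by rewrite ip0l.
by rewrite ipDl.
Qed.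

Lemma ip_sumr {R : realType} {m p k : nat} (F : 'I_k -> 'M[R]_(m, p)) B :
  ip B (\sum_(i < k) F i) = \sum_(i < k) ip B (F i).
Proof. by rewrite ipC ip_suml; apply: eq_bigr => i _; rewrite ipC. Qed.

Lemma ipE {R : realType} {m p : nat} (A B : 'M[R]_(m, p)) :
  ip A B = \sum_(i < m) \sum_(j < p) A i j * B i j.
Proof.
rewrite /ip /mxtrace exchange_big /=; apply: eq_bigr => j _.
rewrite mxE; apply: eq_bigr => i _; by rewrite mxE.
Qed.

Lemma frob2E {R : realType} {m p : nat} (A : 'M[R]_(m, p)) : frob2 A = ip A A.
Proof. by rewrite ipE /frob2; apply: eq_bigr => i _; apply: eq_bigr => j _; rewrite expr2. Qed.

Lemma ip_ge0 {R : realType} {m p : nat} (A : 'M[R]_(m, p)) : 0 <= ip A A.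
Proof. by rewrite ipE; apply: sumr_ge0 => i _; apply: sumr_ge0 => j _; rewrite -expr2 sqr_ge0. Qed.

Lemma frob2_ge0 {R : realType} {m p : nat} (A : 'M[R]_(m, p)) : 0 <= frob2 A.
Proof. by rewrite frob2E ip_ge0. Qed.

Lemma ip_eq0 {R : realType} {m p : nat} (A : 'M[R]_(m, p)) : ip A A = 0 -> A = 0.
Proof.
move=> h; apply/matrixP => i j; rewrite mxE.
have : A i j * A i j <= ip A A.
  rewrite ipE (bigD1 i) //= (bigD1 j) //= -addrA lerDl.
  apply: addr_ge0; first by apply: sumr_ge0 => k _; rewrite -expr2 sqr_ge0.
  by apply: sumr_ge0 => k _; apply: sumr_ge0 => l _; rewrite -expr2 sqr_ge0.
rewrite h -expr2 => h2; apply/eqP; rewrite -sqrf_eq0 eq_le h2 sqr_ge0.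
by [].
Qed.

Lemma frob_ge0 {R : realType} {m p : nat} (A : 'M[R]_(m, p)) : 0 <= frob A.
Proof. exact: sqrtr_ge0. Qed.

Lemma frob_sq {R : realType} {m p : nat} (A : 'M[R]_(m, p)) : frob A ^+ 2 = ip A A.
Proof. by rewrite /frob sqr_sqrtr frob2E // ip_ge0. Qed.

Lemma frob0_eq {R : realType} {m p : nat} (A : 'M[R]_(m, p)) : frob A = 0 -> A = 0.
Proof. by move=> h; apply: ip_eq0; rewrite -frob_sq h expr2 mul0r. Qed.

Lemma ip_CS {R : realType} {m p : nat} (A B : 'M[R]_(m, p)) : ip A B <= frob A * frob B.
Proof.
have [a0|] := eqVneq (frob A) 0.
  by rewrite a0 (frob0_eq _ a0) ip0l mul0r.
have [b0|] := eqVneq (frob B) 0.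
  by rewrite b0 (frob0_eq _ b0) ip0r mulr0.
move=> nb na.
have ha : 0 < frob A by rewrite lt_def na frob_ge0.
have hb : 0 < frob B by rewrite lt_def nb frob_ge0.
have := ip_ge0 (frob B *: A - frob A *: B).
rewrite !ipBl !ipBr !ipZl !ipZr -!frob_sq (ipC B A) => h.
have hab : 0 < frob A * frob B by apply: mulr_gt0.
nra.
Qed.

Lemma ip_CS_abs {R : realType} {m p : nat} (A B : 'M[R]_(m, p)) : `|ip A B| <= frob A * frob B.
Proof.
rewrite ler_norml ip_CS andbT lerNl -ipNl.
apply: le_trans (ip_CS _ _) _.
by rewrite /frob frob2E ipNl ipNr opprK -frob2E.
Qed.

Lemma frob_sqrt_le {R : realType} {m p : nat} (A : 'M[R]_(m, p)) (c : R) :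
  0 <= c -> ip A A <= c ^+ 2 -> frob A <= c.
Proof.
move=> c0 h; rewrite /frob frob2E -(ger0_norm c0) -sqrtr_sqr ler_sqrt //.
exact: sqr_ge0.
Qed.

Lemma frob_triangle {R : realType} {m p : nat} (A B : 'M[R]_(m, p)) :
  frob (A + B) <= frob A + frob B.
Proof.
apply: frob_sqrt_le; first by apply: addr_ge0; apply: frob_ge0.
rewrite ipDl !ipDr -!frob_sq (ipC B A).
have := ip_CS A B; nra.
Qed.

Lemma frobN {R : realType} {m p : nat} (A : 'M[R]_(m, p)) : frob (- A) = frob A.
Proof. by rewrite /frob !frob2E ipNl ipNr opprK. Qed.

Lemma frobZ {R : realType} {m p : nat} (c : R) (A : 'M[R]_(m, p)) :
  frob (c *: A) = `|c| * frob A.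
Proof.
rewrite /frob !frob2E ipZl ipZr mulrA -expr2 sqrtrM ?sqr_ge0 //.
by rewrite sqrtr_sqr.
Qed.

Lemma frob_sum {R : realType} {m p k : nat} (F : 'I_k -> 'M[R]_(m, p)) :
  frob (\sum_(i < k) F i) <= \sum_(i < k) frob (F i).
Proof.
apply: (big_ind2 (fun A x => frob A <= x)).
- by rewrite /frob /frob2 big1 ?sqrtr0 // => i _; rewrite big1 // => j _; rewrite mxE expr0n.
- move=> A1 x1 A2 x2 h1 h2; apply: le_trans (frob_triangle _ _) _; exact: lerD.
- by [].
Qed.

Lemma sum_CS {R : realType} {p : nat} (u v : 'I_p -> R) :
  (\sum_(j < p) u j * v j) ^+ 2 <= (\sum_(j < p) u j ^+ 2) * (\sum_(j < p) v j ^+ 2).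
Proof.
pose U : 'cV[R]_p := \col_j u j.
pose V : 'cV[R]_p := \col_j v j.
have e1 : ip U V = \sum_(j < p) u j * v j.
  by rewrite ipE; apply: eq_bigr => j _; rewrite big_ord1 !mxE.
have e2 : forall w : 'I_p -> R, ip (\col_j w j) (\col_j w j) = \sum_(j < p) w j ^+ 2.
  by move=> w; rewrite ipE; apply: eq_bigr => j _; rewrite big_ord1 !mxE expr2.
rewrite -e1 -e2 -e2 -/U -/V -!frob_sq.
have h := ip_CS_abs U V.
rewrite -exprMn -real_normK ?num_real //.
by apply: lerXn2r => //; rewrite ?nnegrE ?normr_ge0 ?mulr_ge0 ?frob_ge0.
Qed.

Lemma frob2_mul {R : realType} {m p q : nat} (A : 'M[R]_(m, p)) (B : 'M[R]_(p, q)) :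
  frob2 (A *m B) <= frob2 A * frob2 B.
Proof.
rewrite /frob2 big_distrl /=; apply: ler_sum => i _.
rewrite (exchange_big _ _ _ _ _ (fun j k => B j k ^+ 2)) /= big_distrr /=.
apply: ler_sum => k _; rewrite mxE; exact: sum_CS.
Qed.

Lemma frob_mul {R : realType} {m p q : nat} (A : 'M[R]_(m, p)) (B : 'M[R]_(p, q)) :
  frob (A *m B) <= frob A * frob B.
Proof.
apply: frob_sqrt_le; first by apply: mulr_ge0; apply: frob_ge0.
by rewrite exprMn !frob_sq -!frob2E frob2_mul.
Qed.

Lemma stiefel_ip {R : realType} {d r : nat} (x : 'M[R]_(d, r)) :
  stiefel x -> ip x x = r%:R.
Proof. by rewrite /stiefel /ip => ->; rewrite mxtrace1. Qed.

Lemma stiefel_ip_mul {R : realType} {d r q : nat} (x : 'M[R]_(d, r)) (S T : 'M[R]_(r, q)) :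
  stiefel x -> ip (x *m S) (x *m T) = ip S T.
Proof. by rewrite /stiefel /ip trmx_mul => h; rewrite -mulmxA (mulmxA x^T) h mul1mx. Qed.

Lemma stief_diff {R : realType} {d r : nat} (x z : 'M[R]_(d, r)) :
  stiefel x -> stiefel z ->
  (x - z)^T *m (x - z) = x^T *m (x - z) + (x - z)^T *m x.
Proof.
rewrite /stiefel => hx hz.
rewrite !linearB /= !mulmxBl hx hz.
by rewrite opprB addrC.
Qed.

Lemma trD {R : realType} {m p : nat} (A B : 'M[R]_(m, p)) : (A + B)^T = A^T + B^T.
Proof. by apply/matrixP => i j; rewrite !mxE. Qed.
Lemma trN {R : realType} {m p : nat} (A : 'M[R]_(m, p)) : (- A)^T = - A^T.
Proof. by apply/matrixP => i j; rewrite !mxE. Qed.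
Lemma trB {R : realType} {m p : nat} (A B : 'M[R]_(m, p)) : (A - B)^T = A^T - B^T.
Proof. by rewrite trD trN. Qed.
Lemma trZ {R : realType} {m p : nat} (c : R) (A : 'M[R]_(m, p)) : (c *: A)^T = c *: A^T.
Proof. by apply/matrixP => i j; rewrite !mxE. Qed.

Lemma half_half {R : realType} {m p : nat} (S : 'M[R]_(m, p)) :
  2%:R^-1 *: S + 2%:R^-1 *: S = S.
Proof. have h : (2%:R^-1 + 2%:R^-1 : R) = 1 by field. by rewrite -scalerDl h scale1r. Qed.

Lemma symS {R : realType} {d r : nat} (x v : 'M[R]_(d, r)) :
  (x^T *m v + v^T *m x)^T = x^T *m v + v^T *m x.
Proof. by rewrite trD !trmx_mul !trmxK addrC. Qed.

Lemma projT_tangent {R : realType} {d r : nat} (x v : 'M[R]_(d, r)) :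
  stiefel x -> tangent x (projT x v).
Proof.
rewrite /stiefel /tangent => hx.
set S := x^T *m v + v^T *m x.
have hS : S^T = S by exact: symS.
have e1 : x^T *m projT x v = x^T *m v - 2%:R^-1 *: S.
  by rewrite /projT mulmxBr -scalemxAr mulmxA hx mul1mx.
have e2 : (projT x v)^T *m x = (x^T *m projT x v)^T by rewrite trmx_mul trmxK.
rewrite e2 e1 trB trZ hS trmx_mul trmxK.
rewrite addrACA -opprD half_half /S.
by rewrite subrr.
Qed.

Lemma tangentZ {R : realType} {d r : nat} (x xi : 'M[R]_(d, r)) (c : R) :
  tangent x xi -> tangent x (c *: xi).
Proof. by rewrite /tangent => h; rewrite trZ -scalemxAr -scalemxAl -scalerDr h scaler0. Qed.

Lemma tangentD {R : realType} {d r : nat} (x xi zeta : 'M[R]_(d, r)) :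
  tangent x xi -> tangent x zeta -> tangent x (xi + zeta).
Proof.
rewrite /tangent => h1 h2; rewrite trD mulmxDr mulmxDl addrACA h1 h2.
by rewrite addr0.
Qed.

Lemma tangentN {R : realType} {d r : nat} (x xi : 'M[R]_(d, r)) :
  tangent x xi -> tangent x (- xi).
Proof. by move=> h; rewrite -scaleN1r; apply: tangentZ. Qed.

Lemma tr_sym_skew {R : realType} {r : nat} (S K : 'M[R]_r) :
  S^T = S -> K^T = - K -> \tr (S *m K) = 0.
Proof.
move=> hS hK.
have : \tr (S *m K) = - \tr (S *m K).
  rewrite -{1}mxtrace_tr trmx_mul hK hS mulNmx raddfN /= mxtrace_mulC //.
lra.
Qed.

Lemma ip_sym_tangent {R : realType} {d r : nat} (x xi : 'M[R]_(d, r)) (S : 'M[R]_r) :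
  S^T = S -> tangent x xi -> ip (x *m S) xi = 0.
Proof.
rewrite /tangent /ip => hS hT; rewrite trmx_mul hS -mulmxA; apply: tr_sym_skew => //.
rewrite trmx_mul trmxK; apply/eqP; rewrite -addr_eq0 addrC; exact/eqP.
Qed.

Lemma projT_orth {R : realType} {d r : nat} (x v : 'M[R]_(d, r)) :
  stiefel x -> ip (v - projT x v) (projT x v) = 0.
Proof.
move=> hx.
have -> : v - projT x v = x *m (2%:R^-1 *: (x^T *m v + v^T *m x)).
  by rewrite /projT opprB addrC subrK scalemxAr.
apply: ip_sym_tangent; last exact: projT_tangent.
by rewrite trZ symS.
Qed.

Lemma projT_ip {R : realType} {d r : nat} (x v : 'M[R]_(d, r)) :
  stiefel x -> ip v (projT x v) = ip (projT x v) (projT x v).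
Proof.
move=> hx; have := @projT_orth _ _ _ x v hx; rewrite ipBl => h.
by apply/eqP; rewrite -subr_eq0 h.
Qed.

Lemma ipDD {R : realType} {m p : nat} (a b : 'M[R]_(m, p)) :
  ip (a + b) (a + b) = ip a a + 2 * ip a b + ip b b.
Proof. rewrite ipDl !ipDr (ipC b a); ring. Qed.

Lemma projT_le {R : realType} {d r : nat} (x v : 'M[R]_(d, r)) :
  stiefel x -> frob2 (projT x v) <= frob2 v.
Proof.
move=> hx; rewrite !frob2E; have h0 := @projT_orth _ _ _ x v hx.
have e : ip v v = ip ((v - projT x v) + projT x v) ((v - projT x v) + projT x v) by rewrite subrK.
rewrite e ipDD h0 mulr0 addr0 lerDr; exact: ip_ge0.
Qed.

Lemma first_order {R : realType} {d r : nat}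
  (Rt : 'M[R]_(d, r) -> 'M[R]_(d, r) -> 'M[R]_(d, r)) (hRt : retraction Rt)
  (M : R) (hM : 0 < M)
  (hRtM : forall x xi, stiefel x -> tangent x xi ->
            frob (Rt x xi - (x + xi)) <= M * frob2 xi)
  (y s : 'M[R]_(d, r)) :
  stiefel y -> (forall z, stiefel z -> ip s z <= ip s y) -> projT y s = 0.
Proof.
move=> hy hmax.
have tx : tangent y (projT y s) by exact: projT_tangent.
have hq : ip s (projT y s) = ip (projT y s) (projT y s) by exact: projT_ip.
move: tx hq; move: (projT y s) => xi tx hq.
have q0 : 0 <= ip xi xi by exact: ip_ge0.
have c0 : 0 <= frob s * M by apply: mulr_ge0; [exact: frob_ge0 | exact: ltW].
have key : forall h, 0 < h -> h * ip xi xi <= frob s * M * h ^+ 2 * ip xi xi.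
  move=> h h0; have th := tangentZ y xi h tx.
  have [hst _ _] := hRt y hy.
  have hz := hst _ th.
  have he := hRtM _ _ hy th.
  have := hmax _ hz.
  have -> : Rt y (h *: xi) = (Rt y (h *: xi) - (y + h *: xi)) + (y + h *: xi) by rewrite subrK.
  move: he; move: (Rt y (h *: xi) - (y + h *: xi)) => e he.
  rewrite ipDr ipDr ipZr hq => hle.
  have hcs := ip_CS_abs s e.
  have hn : - ip s e <= `|ip s e| by rewrite -normrN ler_norm.
  rewrite frob2E ipZl ipZr in he.
  have hfs := frob_ge0 s.
  have : frob s * frob e <= frob s * (M * (h * (h * ip xi xi))) by apply: ler_wpM2l.
  move=> h2.
  have -> : frob s * M * h ^+ 2 * ip xi xi = frob s * (M * (h * (h * ip xi xi))) by ring.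
  lra.
pose h := (2 * (frob s * M + 1))^-1.
have hpos : 0 < h by rewrite /h invr_gt0; lra.
have eh : h * (2 * (frob s * M + 1)) = 1 by rewrite /h mulVf //; lra.
have k := key h hpos.
have k2 : ip xi xi <= frob s * M * h * ip xi xi.
  have : h * ip xi xi <= h * (frob s * M * h * ip xi xi) by move: k; rewrite expr2; lra.
  by rewrite ler_pM2l.
have hch : frob s * M * h <= 2^-1 by nra.
have : ip xi xi <= 0 by nra.
move=> hle; have q00 : ip xi xi = 0 by apply/eqP; rewrite eq_le hle q0.
exact: ip_eq0.
Qed.

Lemma polar {R : realType} {d r : nat} (y s : 'M[R]_(d, r)) :
  stiefel y -> projT y s = 0 ->
  s = y *m (y^T *m s) /\ (y^T *m s)^T = y^T *m s.
Proof.
rewrite /stiefel /projT => hy /eqP; rewrite subr_eq0 => /eqP hs.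
have e : y^T *m s = 2%:R^-1 *: (y^T *m s + s^T *m y).
  by rewrite {1}hs -scalemxAr mulmxA hy mul1mx.
split; first by rewrite e -scalemxAr -hs.
by rewrite e trZ symS.
Qed.

Lemma conc_eq {R : realType} {d r : nat} (y y' s : 'M[R]_(d, r)) (P : 'M[R]_r) :
  stiefel y -> stiefel y' -> s = y *m P -> P^T = P ->
  2 * ip s (y - y') = \tr (P *m ((y - y')^T *m (y - y'))).
Proof.
move=> hy hy' hs hP; rewrite stief_diff // mulmxDr mxtraceD.
have e1 : ip s (y - y') = \tr (P *m (y^T *m (y - y'))).
  by rewrite /ip hs trmx_mul hP mulmxA.
have e2 : \tr (P *m ((y - y')^T *m y)) = \tr (P *m (y^T *m (y - y'))).
  rewrite -mxtrace_tr !trmx_mul trmxK hP mxtrace_mulC mulmxA //.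
by rewrite e2 -e1; ring.
Qed.

Lemma conc_term {R : realType} {d r : nat} (y x Z : 'M[R]_(d, r)) :
  stiefel y -> stiefel x ->
  frob2 Z - 2%:R^-1 * (frob2 (x - y) * frob2 Z) <= \tr (Z *m (y^T *m x) *m Z^T).
Proof.
move=> hy hx.
have e0 : y^T *m x = 1%:M - y^T *m (y - x).
  by rewrite mulmxBr hy opprB addrC subrK.
rewrite e0 mulmxBr mulmx1 mulmxBl mxtraceD raddfN /=.
have eZ : \tr (Z *m Z^T) = frob2 Z by rewrite frob2E /ip mxtrace_mulC.
rewrite eZ.
set Q := y^T *m (y - x).
have eQ : \tr (Z *m Q *m Z^T) = \tr (Z *m Q^T *m Z^T).
  by rewrite -mxtrace_tr !trmx_mul trmxK mulmxA.
have e2 : 2 * \tr (Z *m Q *m Z^T) = ip ((y - x) *m Z^T) ((y - x) *m Z^T).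
  have -> : 2 * \tr (Z *m Q *m Z^T) = \tr (Z *m Q *m Z^T) + \tr (Z *m Q^T *m Z^T) by rewrite -eQ; ring.
  rewrite -mxtraceD -mulmxDl -mulmxDr /Q trmx_mul trmxK -stief_diff //.
  by rewrite /ip trmx_mul trmxK !mulmxA.
have hb := frob2_mul (y - x) Z^T.
have eT : frob2 Z^T = frob2 Z by rewrite !frob2E /ip trmxK mxtrace_mulC.
have eN : frob2 (y - x) = frob2 (x - y) by rewrite !frob2E -opprB ipNl ipNr opprK.
rewrite eT eN (frob2E ((y - x) *m Z^T)) in hb.
rewrite -e2 in hb.
lra.
Qed.

Lemma ip_adj {R : realType} {n p : nat} (D : 'M[R]_n) (X Y : 'M[R]_(n, p)) :
  ip X (D *m Y) = ip (D^T *m X) Y.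
Proof. by rewrite /ip trmx_mul trmxK mulmxA. Qed.

Lemma psd_trick {R : realType} {n p : nat} (D : 'M[R]_n) (K : R) :
  D^T = D -> (forall X : 'M[R]_(n, p), 0 <= ip X (D *m X)) ->
  (forall X : 'M[R]_(n, p), ip X (D *m X) <= K * ip X X) ->
  forall X : 'M[R]_(n, p), ip (D *m X) (D *m X) <= K * ip X (D *m X).
Proof.
move=> hD hpos hK X.
set q := ip X (D *m X); set W := ip (D *m X) (D *m X).
have W0 : 0 <= W by exact: ip_ge0.
have q0 : 0 <= q by exact: hpos.
have F : forall t, 0 <= q + 2 * t * W + t ^+ 2 * K * W.
  move=> t; have h1 := hpos (X + t *: (D *m X)).
  have h2 := hK (D *m X).
  rewrite mulmxDr -scalemxAr !ipDl !ipDr !ipZl !ipZr in h1.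
  rewrite (ip_adj D X (D *m X)) hD in h1.
  rewrite -/q -/W in h1.
  have h3 : t * (t * ip (D *m X) (D *m (D *m X))) <= t ^+ 2 * K * W.
    rewrite mulrA -expr2 -mulrA ler_wpM2l //; exact: sqr_ge0.
  lra.
have [Kp|Kn] := ltP 0 K.
  have := F (- K^-1).
  have e : (- K^-1) ^+ 2 * K = K^-1 by rewrite sqrrN expr2 -mulrA mulVf ?mulr1 // gt_eqF.
  rewrite e => h.
  have h' : K^-1 * W <= q by lra.
  have := ler_wpM2l (ltW Kp) h'.
  have hK0 : K != 0 by rewrite gt_eqF. rewrite (mulrA K K^-1) (mulfV hK0) mul1r; lra.
have hq : q <= 0.
  have := hK X; have := ip_ge0 X; nra.
have := F (-1); nra.
Qed.

Lemma ip_quad_bound {R : realType} {n p : nat} (B : 'M[R]_n) (X : 'M[R]_(n, p)) :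
  `|ip X (B *m X)| <= frob B * ip X X.
Proof.
apply: le_trans (ip_CS_abs _ _) _.
have := frob_mul B X; have := frob_ge0 X; have := frob_ge0 B; have := frob_ge0 (B *m X).
rewrite -frob_sq; nra.
Qed.

Lemma rayleigh {R : realType} {n : nat} (B : 'M[R]_n) (lam : R) :
  (0 < n)%N -> B^T = B -> (forall mu, eigenvalue B mu -> lam <= mu) ->
  forall c : 'cV[R]_n, lam * ip c c <= ip c (B *m c).
Proof.
move=> n0 hB hlam.
pose E : set R := fun x => exists2 c : 'cV[R]_n, ip c c != 0 & x = ip c (B *m c) / ip c c.
have Ene : nonempty E.
  pose c1 : 'cV[R]_n := const_mx 1.
  have hc1 : ip c1 c1 != 0.
    rewrite ipE (eq_bigr (fun _ => 1)) => [|i _]; last by rewrite big_ord1 !mxE mulr1.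
    by rewrite sumr_const card_ord pnatr_eq0 -lt0n.
  by exists (ip c1 (B *m c1) / ip c1 c1); exists c1.
have Elb : lbound E (- frob B).
  move=> x [c hc ->].
  have hpos : 0 < ip c c by rewrite lt_def hc ip_ge0.
  rewrite ler_pdivlMr // mulNr.
  by have := ip_quad_bound B c; rewrite ler_norml => /andP[].
have Einf : has_lbound E by exists (- frob B).
pose m := reals.inf E.
have hm : forall c : 'cV[R]_n, m * ip c c <= ip c (B *m c).
  move=> c; have [c0|hc] := eqVneq (ip c c) 0.
    by rewrite (ip_eq0 _ c0) mulmx0 ip0l mulr0.
  have hpos : 0 < ip c c by rewrite lt_def hc ip_ge0.
  have : m <= ip c (B *m c) / ip c c by apply: ge_inf => //; exists c.
  by rewrite ler_pdivlMr.
suff : eigenvalue B m.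
  move=> /hlam hl c; apply: le_trans (hm c).
  by rewrite ler_wpM2r // ip_ge0.
pose D := B - m%:M.
have hDq : forall c : 'cV[R]_n, ip c (D *m c) = ip c (B *m c) - m * ip c c.
  by move=> c; rewrite /D mulmxBl mul_scalar_mx ipBr ipZr.
have hDT : D^T = D by rewrite /D trB hB tr_scalar_mx.
have hDpos : forall c : 'cV[R]_n, 0 <= ip c (D *m c).
  by move=> c; rewrite hDq subr_ge0.
have hDK : forall c : 'cV[R]_n, ip c (D *m c) <= frob D * ip c c.
  by move=> c; have := ip_quad_bound D c; rewrite ler_norml => /andP[].
have hT := @psd_trick _ _ 1 D (frob D) hDT hDpos hDK.
have : \det D == 0.
  have [//|hdet] := eqVneq (\det D) 0; exfalso.
  have hU : D \in unitmx by rewrite unitmxE unitfE.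
  pose K := frob2 (invmx D) * frob D + 1.
  have K0 : 0 < K.
    by rewrite /K; have := frob2_ge0 (invmx D); have := frob_ge0 D; nra.
  have hc : forall c : 'cV[R]_n, ip c c <= K * ip c (D *m c).
    move=> c.
    have e : c = invmx D *m (D *m c) by rewrite mulKmx.
    have h1 : ip c c <= frob2 (invmx D) * ip (D *m c) (D *m c).
      by rewrite {1 2}e -frob2E -frob2E frob2_mul.
    have h2 := hT c; have h3 := hDpos c; have h4 := frob2_ge0 (invmx D).
    have h5 : frob2 (invmx D) * ip (D *m c) (D *m c) <= frob2 (invmx D) * (frob D * ip c (D *m c)).
      by rewrite ler_wpM2l.
    rewrite /K; nra.
  have hlb : lbound E (m + K^-1).
    move=> x [c hc0 ->].
    have hpos : 0 < ip c c by rewrite lt_def hc0 ip_ge0.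
    rewrite ler_pdivlMr //.
    have := hc c; rewrite hDq => h.
    have : K^-1 * ip c c <= K^-1 * (K * (ip c (B *m c) - m * ip c c)).
      by rewrite ler_wpM2l // invr_ge0 ltW.
    rewrite mulrA mulVf ?mul1r; last by rewrite gt_eqF.
    lra.
  have := lb_le_inf Ene hlb; rewrite -/m.
  have : 0 < K^-1 by rewrite invr_gt0.
  lra.
move=> /det0P [v v0 hv].
apply/eigenvalueP; exists v => //.
by move: hv; rewrite /D mulmxBr mul_mx_scalar => /eqP; rewrite subr_eq0 => /eqP.
Qed.

Definition dstoch {R : realType} {n : nat} (B : 'M[R]_n) : Prop :=
  [/\ B^T = B, forall i j, 0 <= B i j,
      forall i, \sum_(j < n) B i j = 1 & forall j, \sum_(i < n) B i j = 1].

Lemma sum_delta {R : realType} {n : nat} (i : 'I_n) :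
  \sum_(j < n) ((i == j)%:R : R) = 1.
Proof.
rewrite (bigD1 i) //= eqxx big1 ?addr0 // => j hj.
by rewrite eq_sym (negPf hj).
Qed.

Lemma sum_delta' {R : realType} {n : nat} (j : 'I_n) :
  \sum_(i < n) ((i == j)%:R : R) = 1.
Proof.
rewrite (bigD1 j) //= eqxx big1 ?addr0 // => i hi.
by rewrite (negPf hi).
Qed.

Lemma mxpow_comm {R : realType} {n : nat} (W : 'M[R]_n) t :
  mxpow W t *m W = W *m mxpow W t.
Proof.
elim: t => [|t IH] /=; first by rewrite /mxpow /= mul1mx mulmx1.
by rewrite /mxpow /= -mulmxA -/(mxpow W t) IH.
Qed.

Lemma mxpow_dstoch {R : realType} {n : nat} (W : 'M[R]_n) t :
  sym_doubly_stochastic W -> dstoch (mxpow W t).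
Proof.
case=> hT h0 hr hc.
elim: t => [|t [IT I0 Ir Ic]].
  rewrite /mxpow /=; split.
  - exact: tr_scalar_mx.
  - by move=> i j; rewrite mxE ler0n.
  - by move=> i; under eq_bigr do rewrite mxE; exact: sum_delta.
  - by move=> j; under eq_bigr do rewrite mxE; exact: sum_delta'.
have e : mxpow W t.+1 = W *m mxpow W t by [].
rewrite e; split.
- by rewrite trmx_mul IT hT mxpow_comm.
- move=> i j; rewrite mxE; apply: sumr_ge0 => k _; exact: mulr_ge0.
- move=> i; under eq_bigr do rewrite mxE.
  rewrite exchange_big /=.
  under eq_bigr do rewrite -mulr_sumr Ir mulr1.
  exact: hr.
- move=> j; under eq_bigr do rewrite mxE.
  rewrite exchange_big /=.
  under eq_bigr do rewrite -mulr_suml hc mul1r.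
  exact: Ic.
Qed.

Lemma ip_col {R : realType} {n : nat} (f g : 'I_n -> R) :
  ip (\col_i f i) (\col_i g i) = \sum_(i < n) f i * g i.
Proof. by rewrite ipE; apply: eq_bigr => i _; rewrite big_ord1 !mxE. Qed.

Lemma mul_col {R : realType} {n : nat} (B : 'M[R]_n) (f : 'I_n -> R) :
  B *m (\col_i f i) = \col_i (\sum_(j < n) B i j * f j).
Proof. by apply/matrixP => i k; rewrite !mxE; apply: eq_bigr => j _; rewrite mxE. Qed.

Lemma quad_identity {R : realType} {n : nat} (B : 'M[R]_n) (f : 'I_n -> R) :
  dstoch B ->
  \sum_(i < n) \sum_(j < n) B i j * (f i - f j) ^+ 2 =
  2 * (ip (\col_i f i) (\col_i f i) - ip (\col_i f i) (B *m \col_i f i)).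
Proof.
case=> hT h0 hr hc.
rewrite mul_col !ip_col.
have e1 : \sum_(i < n) \sum_(j < n) B i j * f i ^+ 2 = \sum_(i < n) f i * f i.
  apply: eq_bigr => i _; rewrite -mulr_suml hr mul1r expr2 //.
have e2 : \sum_(i < n) \sum_(j < n) B i j * f j ^+ 2 = \sum_(i < n) f i * f i.
  rewrite exchange_big /=; apply: eq_bigr => j _; rewrite -mulr_suml hc mul1r expr2 //.
have e3 : \sum_(i < n) \sum_(j < n) B i j * (f i - f j) ^+ 2 =
   \sum_(i < n) \sum_(j < n) B i j * f i ^+ 2 + \sum_(i < n) \sum_(j < n) B i j * f j ^+ 2
   - 2 * \sum_(i < n) f i * (\sum_(j < n) B i j * f j).
  rewrite mulr_sumr -!big_split -sumrB /=; apply: eq_bigr => i _.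
  rewrite !mulr_sumr -!big_split -sumrB /=; apply: eq_bigr => j _; ring.
by rewrite e3 e1 e2; ring.
Qed.

Lemma dstoch_le {R : realType} {n : nat} (B : 'M[R]_n) (c : 'cV[R]_n) :
  dstoch B -> ip c (B *m c) <= ip c c.
Proof.
move=> hB; have e : c = \col_i c i 0 by apply/matrixP => i k; rewrite !mxE ord1.
have := quad_identity B (fun i => c i 0) hB; rewrite -e => h.
have : 0 <= \sum_(i < n) \sum_(j < n) B i j * (c i 0 - c j 0) ^+ 2.
  apply: sumr_ge0 => i _; apply: sumr_ge0 => j _; case: hB => _ h0 _ _.
  by apply: mulr_ge0 => //; exact: sqr_ge0.
lra.
Qed.

Lemma op_bound {R : realType} {n : nat} (B : 'M[R]_n) (lam : R) :
  (0 < n)%N -> dstoch B -> (forall mu, eigenvalue B mu -> lam <= mu) ->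
  [/\ 0 <= 1 - lam,
      forall c : 'cV[R]_n, ip c c - ip c (B *m c) <= (1 - lam) * ip c c &
      forall c : 'cV[R]_n, ip (c - B *m c) (c - B *m c) <= (1 - lam) ^+ 2 * ip c c].
Proof.
move=> n0 hB hlam.
have hBT : B^T = B by case: hB.
have hr := rayleigh B lam n0 hBT hlam.
have hc : forall c : 'cV[R]_n, ip c c - ip c (B *m c) <= (1 - lam) * ip c c.
  by move=> c; have := hr c; lra.
pose D : 'M[R]_n := 1%:M - B.
have hD : forall c : 'cV[R]_n, D *m c = c - B *m c by move=> c; rewrite /D mulmxBl mul1mx.
have hDq : forall c : 'cV[R]_n, ip c (D *m c) = ip c c - ip c (B *m c) by move=> c; rewrite hD ipBr.
have hDT : D^T = D by rewrite /D trB trmx1 hBT.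
have hDpos : forall c : 'cV[R]_n, 0 <= ip c (D *m c).
  by move=> c; rewrite hDq subr_ge0; exact: dstoch_le.
have hDK : forall c : 'cV[R]_n, ip c (D *m c) <= (1 - lam) * ip c c by move=> c; rewrite hDq.
have L0 : 0 <= 1 - lam.
  pose c1 : 'cV[R]_n := const_mx 1.
  have hc1 : 0 < ip c1 c1.
    rewrite ipE (eq_bigr (fun _ => 1)) => [|i _]; last by rewrite big_ord1 !mxE mulr1.
    by rewrite sumr_const card_ord ltr0n.
  have := hDpos c1; have := hDK c1; nra.
split => // c.
have hT := @psd_trick _ _ 1 D (1 - lam) hDT hDpos hDK c.
rewrite -hD.
apply: le_trans hT _.
rewrite expr2 -mulrA ler_wpM2l //.
Qed.

Definition colv {R : realType} {n d r : nat} (Y : 'I_n -> 'M[R]_(d, r)) p q : 'cV[R]_n :=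
  \col_i (Y i p q).

Lemma sum_frob2_colv {R : realType} {n d r : nat} (Y : 'I_n -> 'M[R]_(d, r)) :
  \sum_(i < n) frob2 (Y i) = \sum_(p < d) \sum_(q < r) ip (colv Y p q) (colv Y p q).
Proof.
rewrite /frob2 exchange_big /=; apply: eq_bigr => p _.
rewrite exchange_big /=; apply: eq_bigr => q _.
by rewrite /colv ip_col; apply: eq_bigr => i _; rewrite expr2.
Qed.

Lemma trmx_sum {R : realType} {m p k : nat} (F : 'I_k -> 'M[R]_(m, p)) :
  (\sum_(i < k) F i)^T = \sum_(i < k) (F i)^T.
Proof. by apply/matrixP => i j; rewrite !mxE !summxE; apply: eq_bigr => l _; rewrite mxE. Qed.

Lemma colv_v {R : realType} {n d r : nat} (B : 'M[R]_n) (x : 'I_n -> 'M[R]_(d, r)) (y : 'M[R]_(d, r)) p q :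
  dstoch B ->
  colv (fun i => x i - \sum_(j < n) B i j *: x j) p q =
  colv (fun i => x i - y) p q - B *m colv (fun i => x i - y) p q.
Proof.
case=> _ _ hr _.
apply/matrixP => i k; rewrite /colv !mxE summxE.
have e : \sum_(j < n) B i j * (\col_i0 (x i0 - y) p q) j k = \sum_(j < n) B i j * x j p q - y p q.
  under eq_bigr do rewrite !mxE mulrBr.
  by rewrite sumrB -mulr_suml hr mul1r.
rewrite e; under eq_bigr do rewrite mxE.
ring.
Qed.

Lemma G2 {R : realType} {n d r : nat} (B : 'M[R]_n) (lam : R) (x : 'I_n -> 'M[R]_(d, r)) (y : 'M[R]_(d, r)) :
  (0 < n)%N -> dstoch B -> (forall mu, eigenvalue B mu -> lam <= mu) ->
  (forall i, stiefel (x i)) ->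
  \sum_(i < n) frob2 (projT (x i) (x i - \sum_(j < n) B i j *: x j)) <= (1 - lam) ^+ 2 * dist2 x y.
Proof.
move=> n0 hB hlam hx.
have [L0 _ hop] := op_bound B lam n0 hB hlam.
apply: le_trans (_ : \sum_(i < n) frob2 (x i - \sum_(j < n) B i j *: x j) <= _).
  by apply: ler_sum => i _; exact: projT_le.
rewrite sum_frob2_colv /dist2 sum_frob2_colv mulr_sumr; apply: ler_sum => p _.
rewrite mulr_sumr; apply: ler_sum => q _.
rewrite (colv_v B x y p q hB); exact: hop.
Qed.

Lemma frob_stiefel_mul {R : realType} {d r q : nat} (x : 'M[R]_(d, r)) (S : 'M[R]_(r, q)) :
  stiefel x -> frob (x *m S) = frob S.
Proof. by move=> hx; rewrite /frob !frob2E stiefel_ip_mul. Qed.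

Lemma frob_tr {R : realType} {m p : nat} (A : 'M[R]_(m, p)) : frob A^T = frob A.
Proof. by rewrite /frob !frob2E /ip trmxK mxtrace_mulC. Qed.

Lemma sum_pairs_colv {R : realType} {n d r : nat} (B : 'M[R]_n) (x : 'I_n -> 'M[R]_(d, r)) (y : 'M[R]_(d, r)) :
  dstoch B ->
  \sum_(i < n) \sum_(j < n) B i j * frob2 (x i - x j) =
  \sum_(p < d) \sum_(q < r) 2 * (ip (colv (fun i => x i - y) p q) (colv (fun i => x i - y) p q)
       - ip (colv (fun i => x i - y) p q) (B *m colv (fun i => x i - y) p q)).
Proof.
move=> hB.
have e : forall i j, B i j * frob2 (x i - x j) =
   \sum_(p < d) \sum_(q < r) B i j * ((x i - y) p q - (x j - y) p q) ^+ 2.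
  move=> i j; rewrite /frob2 mulr_sumr; apply: eq_bigr => p _.
  rewrite mulr_sumr; apply: eq_bigr => q _; rewrite !mxE; congr (_ * _); congr (_ ^+ 2); ring.
under eq_bigr do under eq_bigr do rewrite e.
under eq_bigr do rewrite exchange_big /=.
rewrite exchange_big /=; apply: eq_bigr => p _.
under eq_bigr do rewrite exchange_big /=.
rewrite exchange_big /=; apply: eq_bigr => q _.
by rewrite /colv (quad_identity B (fun i => (x i - y) p q) hB).
Qed.

Lemma G1 {R : realType} {n d r : nat} (B : 'M[R]_n) (lam : R) (x : 'I_n -> 'M[R]_(d, r)) (y : 'M[R]_(d, r)) :
  (0 < n)%N -> dstoch B -> (forall mu, eigenvalue B mu -> lam <= mu) ->
  (forall i, stiefel (x i)) ->
  frob (\sum_(i < n) projT (x i) (x i - \sum_(j < n) B i j *: x j)) <= (1 - lam) * dist2 x y.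
Proof.
move=> n0 hB hlam hx.
have [L0 hq _] := op_bound B lam n0 hB hlam.
have hB' := hB; case: hB' => hBT hB0 hr hc.
pose v := fun i => x i - \sum_(j < n) B i j *: x j.
have hv : forall i, v i = \sum_(j < n) B i j *: (x i - x j).
  move=> i; rewrite /v; under [RHS]eq_bigr do rewrite scalerBr.
  by rewrite sumrB -scaler_suml hr scale1r.
have hsum : \sum_(i < n) v i = 0.
  rewrite /v sumrB exchange_big /=.
  under [X in _ - X]eq_bigr do rewrite -scaler_suml hc scale1r.
  by rewrite subrr.
pose S := fun i => (x i)^T *m v i + (v i)^T *m x i.
have hS : forall i, S i = \sum_(j < n) B i j *: ((x i - x j)^T *m (x i - x j)).
  move=> i; rewrite /S hv mulmx_sumr trmx_sum mulmx_suml -big_split /=.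
  apply: eq_bigr => j _; rewrite trZ -scalemxAr -scalemxAl -scalerDr.
  by rewrite stief_diff.
have hP : \sum_(i < n) projT (x i) (x i - \sum_(j < n) B i j *: x j) =
          - (2%:R^-1 *: \sum_(i < n) (x i *m S i)).
  rewrite /projT -/v; rewrite (eq_bigr (fun i => v i - 2%:R^-1 *: (x i *m S i))) //.
  by rewrite sumrB hsum sub0r scaler_sumr.
rewrite hP frobN frobZ.
have hfS : forall i, frob (S i) <= \sum_(j < n) B i j * frob2 (x i - x j).
  move=> i; rewrite hS; apply: le_trans (frob_sum _) _; apply: ler_sum => j _.
  rewrite frobZ ger0_norm //; apply: ler_wpM2l => //.
  apply: le_trans (frob_mul _ _) _; rewrite frob_tr -expr2 frob_sq frob2E //.
have h1 : frob (\sum_(i < n) x i *m S i) <= \sum_(i < n) \sum_(j < n) B i j * frob2 (x i - x j).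
  apply: le_trans (frob_sum _) _; apply: ler_sum => i _.
  by rewrite frob_stiefel_mul.
rewrite (sum_pairs_colv B x y hB) in h1.
have h2 : \sum_(p < d) \sum_(q < r) 2 * (ip (colv (fun i => x i - y) p q) (colv (fun i => x i - y) p q)
       - ip (colv (fun i => x i - y) p q) (B *m colv (fun i => x i - y) p q))
   <= 2 * ((1 - lam) * dist2 x y).
  rewrite /dist2 sum_frob2_colv !mulr_sumr; apply: ler_sum => p _.
  rewrite !mulr_sumr; apply: ler_sum => q _.
  rewrite ler_pM2l //; exact: hq.
have h3 : 0 <= frob (\sum_(i < n) x i *m S i) by exact: frob_ge0.
rewrite ger0_norm; last by rewrite invr_ge0 ler0n.
have := le_trans h1 h2.
move: h3; move: (frob _) => F h3 h4.
have e2 : (2%:R^-1 : R) * 2 = 1 by rewrite mulVf // pnatr_eq0.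
nra.
Qed.

Lemma dist2_expand {R : realType} {n d r : nat} (x : 'I_n -> 'M[R]_(d, r)) (z : 'M[R]_(d, r)) :
  (forall i, stiefel (x i)) -> stiefel z ->
  dist2 x z = n%:R * (2 * r%:R) - 2 * ip (\sum_(i < n) x i) z.
Proof.
move=> hx hz; rewrite /dist2 (eq_bigr (fun i => 2 * r%:R - 2 * ip (x i) z)) => [|i _].
  rewrite sumrB sumr_const card_ord -mulr_sumr ip_suml -[_ *+ n]mulr_natl; ring.
by rewrite frob2E ipBl !ipBr stiefel_ip // stiefel_ip // (ipC z (x i)); ring.
Qed.

Lemma IAM_max {R : realType} {n d r : nat} (x : 'I_n -> 'M[R]_(d, r)) (y : 'M[R]_(d, r)) :
  (forall i, stiefel (x i)) -> is_IAM x y ->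
  forall z, stiefel z -> ip (\sum_(i < n) x i) z <= ip (\sum_(i < n) x i) y.
Proof.
move=> hx [hy hmin] z hz; have := hmin z hz.
rewrite (dist2_expand x y hx hy) (dist2_expand x z hx hz); lra.
Qed.

Lemma conc_total {R : realType} {n d r : nat}
  (Rt : 'M[R]_(d, r) -> 'M[R]_(d, r) -> 'M[R]_(d, r)) (hRt : retraction Rt)
  (M : R) (hM : 0 < M)
  (hRtM : forall x xi, stiefel x -> tangent x xi ->
            frob (Rt x xi - (x + xi)) <= M * frob2 xi)
  (x : 'I_n -> 'M[R]_(d, r)) (y y' : 'M[R]_(d, r)) :
  (forall i, stiefel (x i)) -> is_IAM x y -> stiefel y' ->
  frob2 (y - y') * (n%:R - 2%:R^-1 * dist2 x y) <= 2 * ip (\sum_(i < n) x i) (y - y').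
Proof.
move=> hx hI hy'.
have hy : stiefel y by case: hI.
set s := \sum_(i < n) x i.
have h0 := first_order Rt hRt M hM hRtM y s hy (IAM_max x y hx hI).
have [hs hP] := polar y s hy h0.
rewrite (conc_eq y y' s (y^T *m s) hy hy' hs hP).
have -> : \tr (y^T *m s *m ((y - y')^T *m (y - y'))) =
          \tr ((y - y') *m (y^T *m s) *m (y - y')^T).
  by rewrite mulmxA mxtrace_mulC !mulmxA.
rewrite /s mulmx_sumr mulmx_sumr mulmx_suml raddf_sum /=.
have h := fun i => conc_term y (x i) (y - y') hy (hx i).
apply: le_trans (ler_sum _ (fun i _ => h i)).
rewrite sumrB sumr_const card_ord -mulr_sumr /dist2.
have -> : \sum_(i < n) frob2 (x i - y) * frob2 (y - y') = (\sum_(i < n) frob2 (x i - y)) * frob2 (y - y').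
  by rewrite mulr_suml.
rewrite -mulr_natr.
lra.
Qed.

Lemma zmod_aux (V : zmodType) (a b c : V) : a - b = c + (a - (b + c)).
Proof. by rewrite opprD addrCA [c + _]addrCA subrr addr0. Qed.

Lemma frob2_add2 {R : realType} {m p : nat} (a b : 'M[R]_(m, p)) :
  frob2 (a + b) <= 2 * frob2 a + 2 * frob2 b.
Proof.
rewrite !frob2E ipDD.
have := ip_ge0 (a - b); rewrite ipBl !ipBr (ipC b a) => h; lra.
Qed.

Lemma frob2N {R : realType} {m p : nat} (a : 'M[R]_(m, p)) : frob2 (- a) = frob2 a.
Proof. by rewrite !frob2E ipNl ipNr opprK. Qed.

Lemma frob2Z {R : realType} {m p : nat} (c : R) (a : 'M[R]_(m, p)) :
  frob2 (c *: a) = c ^+ 2 * frob2 a.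
Proof. by rewrite !frob2E ipZl ipZr mulrA expr2. Qed.

Theorem mainTheorem1 (R : realType) (n d r : nat)
  (hn : (1 <= n)%N) (hr : (1 <= r)%N) (hrd : (r <= d)%N)
  (W : 'M[R]_n) (hW : sym_doubly_stochastic W) (t : nat) (ht : (1 <= t)%N)
  (Rt : 'M[R]_(d, r) -> 'M[R]_(d, r) -> 'M[R]_(d, r)) (hRt : retraction Rt)
  (M : R) (hM : 0 < M)
  (hRtM : forall x xi, stiefel x -> tangent x xi ->
            frob (Rt x xi - (x + xi)) <= M * frob2 xi)
  (delta1 delta2 : R) (hd1 : 0 < delta1) (hd2 : 0 < delta2)
  (hd12 : delta1 <= (5 * Num.sqrt (r%:R))^-1 * delta2)
  (hd2' : delta2 <= 6^-1)
  (lam : R) (hlam : min_eigenvalue (mxpow W t) lam)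
  (xk xk1 u : 'I_n -> 'M[R]_(d, r)) (xbk xbk1 : 'M[R]_(d, r))
  (alpha beta : R)
  (ha0 : 0 <= alpha) (ha1 : alpha <= M^-1) (hb : 0 <= beta)
  (hIAMk : is_IAM xk xbk) (hIAMk1 : is_IAM xk1 xbk1)
  (hNk : inN delta1 delta2 xk xbk) (hNk1 : inN1 delta1 xk1 xbk1)
  (hu : forall i, tangent (xk i) (u i))
  (hupd : forall i, xk1 i =
     Rt (xk i) (- (alpha *: grad_phi W t xk i) + beta *: u i)) :
  let Lt := Lconst lam in
  let uhat := (n%:R)^-1 *: \sum_(i < n) u i in
  frob (xbk - xbk1) <=
    (1 - 2 * delta1 ^+ 2)^-1 *
      ((2 * Lt ^+ 2 * alpha + Lt * alpha) / n%:R * dist2 xk xbk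
       + beta * frob uhat
       + 2 * M * beta ^+ 2 / n%:R * \sum_(i < n) frob2 (u i)).
Proof.
cbv zeta; rewrite /Lconst; set uhat := n%:R^-1 *: \sum_(i < n) u i.
have n0 : (0 < n)%N by [].
have hB := mxpow_dstoch W t hW.
have hlam' : forall mu, eigenvalue (mxpow W t) mu -> lam <= mu by case: hlam.
have hxk : forall i, stiefel (xk i) by case: hNk => [[]].
have hxk1 : forall i, stiefel (xk1 i) by case: hNk1.
have hD0 : dist2 xk xbk <= n%:R * delta1 ^+ 2 by case: hNk => [[]].
have hD1 : dist2 xk1 xbk1 <= n%:R * delta1 ^+ 2 by case: hNk1.
have hy0 : stiefel xbk by case: hIAMk.
have hy1 : stiefel xbk1 by case: hIAMk1.
have c0 := conc_total Rt hRt M hM hRtM xk xbk xbk1 hxk hIAMk hy1.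
have c1 := conc_total Rt hRt M hM hRtM xk1 xbk1 xbk hxk1 hIAMk1 hy0.
set Z := xbk - xbk1.
have eZ : xbk1 - xbk = - Z by rewrite /Z opprB.
rewrite eZ ipNr in c1.
have eZ2 : frob2 (- Z) = frob2 Z by rewrite !frob2E ipNl ipNr opprK.
rewrite eZ2 in c1. rewrite -/Z in c0.
set s0 := \sum_(i < n) xk i in c0 *.
set s1 := \sum_(i < n) xk1 i in c1 *.
have hcs := ip_CS (s0 - s1) Z.
rewrite ipBl in hcs.
have fZ2 : frob2 Z = frob Z ^+ 2 by rewrite frob_sq frob2E.
pose g := fun i => grad_phi W t xk i.
pose xi := fun i => - (alpha *: g i) + beta *: u i.
pose e := fun i => xk1 i - (xk i + xi i).
have txi : forall i, tangent (xk i) (xi i).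
  move=> i; apply: tangentD; last exact: tangentZ.
  by apply: tangentN; apply: tangentZ; exact: projT_tangent.
have he : forall i, frob (e i) <= M * frob2 (xi i).
  by move=> i; rewrite /e hupd; exact: hRtM.
have hxi : forall i, frob2 (xi i) <= 2 * alpha ^+ 2 * frob2 (g i) + 2 * beta ^+ 2 * frob2 (u i).
  move=> i; apply: le_trans (frob2_add2 _ _) _.
  by rewrite frob2N !frob2Z !mulrA.
have es : s1 - s0 = - (alpha *: \sum_(i < n) g i) + beta *: \sum_(i < n) u i + \sum_(i < n) e i.
  rewrite /s1 /s0 -sumrB (eq_bigr (fun i => xi i + e i)) => [|i _]; last exact: zmod_aux.
  by rewrite big_split /= /xi big_split /= sumrN !scaler_sumr.
have hfs : frob (s0 - s1) <= alpha * frob (\sum_(i < n) g i) + beta * frob (\sum_(i < n) u i)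
                              + \sum_(i < n) frob (e i).
  rewrite -frobN opprB es.
  apply: le_trans (frob_triangle _ _) _; apply: lerD; last exact: frob_sum.
  apply: le_trans (frob_triangle _ _) _; rewrite frobN !frobZ !ger0_norm //.
have hE : \sum_(i < n) frob (e i) <=
   M * (2 * alpha ^+ 2 * \sum_(i < n) frob2 (g i) + 2 * beta ^+ 2 * \sum_(i < n) frob2 (u i)).
  rewrite !mulr_sumr -big_split mulr_sumr /=; apply: ler_sum => i _.
  apply: le_trans (he i) _; rewrite ler_pM2l //; exact: hxi.
have hG1 : frob (\sum_(i < n) g i) <= (1 - lam) * dist2 xk xbk.
  exact: (G1 (mxpow W t) lam xk xbk n0 hB hlam' hxk).
have hG2 : \sum_(i < n) frob2 (g i) <= (1 - lam) ^+ 2 * dist2 xk xbk.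
  exact: (G2 (mxpow W t) lam xk xbk n0 hB hlam' hxk).
have [L0 _ _] := op_bound (mxpow W t) lam n0 hB hlam'.
have hMa : M * alpha <= 1.
  by have := ler_wpM2l (ltW hM) ha1; rewrite mulfV ?gt_eqF.
have huhat : frob (\sum_(i < n) u i) = n%:R * frob uhat.
  rewrite /uhat frobZ ger0_norm ?invr_ge0 ?ler0n // mulrA mulfV ?mul1r //.
  by rewrite pnatr_eq0 -lt0n.
have hnpos : (0 : R) < n%:R by rewrite ltr0n.
have D0 : 0 <= dist2 xk xbk by apply: sumr_ge0 => i _; exact: frob2_ge0.
have D1 : 0 <= dist2 xk1 xbk1 by apply: sumr_ge0 => i _; exact: frob2_ge0.
have G2p : 0 <= \sum_(i < n) frob2 (g i) by apply: sumr_ge0 => i _; exact: frob2_ge0.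
have U2p : 0 <= \sum_(i < n) frob2 (u i) by apply: sumr_ge0 => i _; exact: frob2_ge0.
have fZp := frob_ge0 Z.
have fsp := frob_ge0 (s0 - s1).
have fup := frob_ge0 uhat.
have hsr : 1 <= Num.sqrt (r%:R : R).
  have hr1 : (1 : R) <= r%:R by rewrite ler1n.
  by move: hr1; rewrite -ler_sqrt ?ler0n // sqrtr1.
have hd1s : delta1 <= 30^-1.
  have h5 : (5 * Num.sqrt (r%:R : R))^-1 <= 5^-1.
    by rewrite lef_pV2 ?posrE; nra.
  have : (5 * Num.sqrt (r%:R : R))^-1 * delta2 <= 5^-1 * 6^-1.
    by apply: ler_pM => //; [rewrite invr_ge0; nra | exact: ltW].
  lra.
have hdd : delta1 ^+ 2 <= 900^-1.
  have : delta1 * delta1 <= 30^-1 * 30^-1 by apply: ler_pM => //; exact: ltW.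
  rewrite expr2; lra.
set L := 1 - lam in hG1 hG2 L0 *.
set D0v := dist2 xk xbk in hD0 c0 hG1 hG2 D0 *.
set D1v := dist2 xk1 xbk1 in hD1 c1 D1.
set G1v := frob (\sum_(i < n) g i) in hfs hG1.
set G2v := \sum_(i < n) frob2 (g i) in hE hG2 G2p.
set U2 := \sum_(i < n) frob2 (u i) in hE U2p *.
set Ev := \sum_(i < n) frob (e i) in hfs hE.
set fs := frob (s0 - s1) in hcs hfs fsp.
set fu := frob uhat in huhat fup *.
rewrite huhat in hfs.
set fZ := frob Z in hcs fZ2 fZp *.
set F2 := frob2 Z in c0 c1 fZ2.
set nn := (n%:R : R) in hD0 hD1 c0 c1 hnpos huhat hfs *.
have k1 : alpha * G1v <= alpha * (L * D0v) by apply: ler_wpM2l.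
have k2 : M * (2 * alpha ^+ 2 * G2v) <= 2 * alpha * (L ^+ 2 * D0v).
  have : M * alpha * (2 * alpha * G2v) <= 1 * (2 * alpha * G2v).
    apply: ler_wpM2r => //; nra.
  have : 2 * alpha * G2v <= 2 * alpha * (L ^+ 2 * D0v) by apply: ler_wpM2l => //; nra.
  nra.
have hfs2 : fs <= alpha * L * D0v + 2 * alpha * L ^+ 2 * D0v + nn * beta * fu + 2 * M * beta ^+ 2 * U2.
  nra.
have hk : F2 * (nn * (2 - delta1 ^+ 2)) <= 2 * (fs * fZ).
  have : F2 * (2 * nn - 2^-1 * (D0v + D1v)) <= 2 * (fs * fZ) by lra.
  have : F2 * (nn * (2 - delta1 ^+ 2)) <= F2 * (2 * nn - 2^-1 * (D0v + D1v)).
    apply: ler_wpM2l; first by rewrite fZ2; exact: sqr_ge0.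
    lra.
  lra.
set Eg := (2 * L ^+ 2 * alpha + L * alpha) / nn * D0v + beta * fu + 2 * M * beta ^+ 2 / nn * U2.
have hEg : nn * Eg = alpha * L * D0v + 2 * alpha * L ^+ 2 * D0v + nn * beta * fu + 2 * M * beta ^+ 2 * U2.
  rewrite /Eg; field; lra.
have hkap : 0 < 1 - 2 * delta1 ^+ 2 by lra.
rewrite ler_pdivlMl //.
have [fz0|fzp] := eqVneq fZ 0.
  rewrite fz0 mulr0.
  have : 0 <= nn * Eg by lra.
  by rewrite pmulr_rge0.
have fZpos : 0 < fZ by rewrite lt_def fzp fZp.
have : fZ * (nn * (2 - delta1 ^+ 2)) <= 2 * fs.
  rewrite fZ2 expr2 -mulrA in hk.
  have e2 : 2 * (fs * fZ) = fZ * (2 * fs) by ring.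
  rewrite e2 in hk.
  by move: hk; rewrite ler_pM2l.
move=> h1.
have h2 : nn * (fZ * (2 - delta1 ^+ 2)) <= nn * (2 * Eg) by lra.
rewrite ler_pM2l // in h2.
have : fZ * (1 - 2 * delta1 ^+ 2) <= fZ * (1 - 2^-1 * delta1 ^+ 2) by apply: ler_wpM2l => //; have := sqr_ge0 delta1; lra.
lra.
Qed.
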